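(* In noiseless non-adaptive group testing with $N$ items and $K$ defectives, with random Bernoulli$(1/K)$ design and maximum-likelihood decoding, in the regime $N,K\to\infty$ with $K=o(N)$, approximate reconstruction of the defective set with up to $\alpha K$ misses (for a fixed small $\alpha\in(0,1)$) is achievable with $T=O(K\log N)$ tests, i.e. the probability that the decoded $K$-set misses more than $\alpha K$ defectives can be made arbitrarily small.
   Context: Design: $N\times T$ binary matrix with i.i.d. Bernoulli$(1/K)$ entries, $X_j(t)=1$ iff item $j$ is in test $t$. Noiseless outcomes $Y(t)=\bigvee_{j\in S}X_j(t)$ for the defective set $S$, $|S|=K$. The ML decoder outputs a $K$-subset $S'$ maximizing $p(Y^T\mid\mathbf X_{S'})$; an error is declared only if $|S\setminus S'|>\alpha K$. Probabilities are averaged over the random design and over $S$ uniform among $K$-subsets. *)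

(* Defs.v *)
From HB Require Import structures.
From mathcomp Require Import all_boot all_order all_algebra.
From mathcomp Require Import all_classical all_reals all_analysis.
Set Implicit Arguments. Unset Strict Implicit. Unset Printing Implicit Defensive.
Import Order.TTheory GRing.Theory Num.Theory.
Local Open Scope ring_scope.

Section GroupTesting.
Variable R : realType.

(* A design: X (j, t) = true iff item j is in test t. *)
Definition design (N T : nat) := {ffun 'I_N * 'I_T -> bool}.

Definition outcome N T (X : design N T) (S : {set 'I_N}) : {ffun 'I_T -> bool} :=
  [ffun t => [exists j in S, X (j, t)]].

Definition lik N T (X : design N T) (S' : {set 'I_N}) (Y : {ffun 'I_T -> bool}) : R :=
  if outcome X S' == Y then 1 else 0.

Definition ksubsets N K : {set {set 'I_N}} := [set S : {set 'I_N} | #|S| == K].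

Definition ML_output N T K (X : design N T) (Y : {ffun 'I_T -> bool}) (S' : {set 'I_N}) : bool :=
  (S' \in ksubsets N K) && [forall S'' in ksubsets N K, lik X S'' Y <= lik X S' Y].

Definition design_prob N T K (X : design N T) : R :=
  \prod_(p : 'I_N * 'I_T) (if X p then (K%:R)^-1 else 1 - (K%:R)^-1).

Definition misses_too_many N K (alpha : R) (S S' : {set 'I_N}) : bool :=
  alpha * K%:R < #|S :\: S'|%:R.

(* Ties in the ML decoder are resolved adversarially: an error is counted if
   SOME ML output misses more than alpha*K defectives. *)
Definition err_prob (N K T : nat) (alpha : R) : R :=
  \sum_(S in ksubsets N K) \sum_(X : design N T)
    ('C(N, K)%:R)^-1 * design_prob K X *
    (if [exists S', ML_output K X (outcome X S) S' && misses_too_many K alpha S S']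
     then 1 else 0).

End GroupTesting.

(* Main.v *)
Set Warnings "-all".
Require Import Defs.
From HB Require Import structures.
From mathcomp Require Import all_boot all_order all_algebra.
From mathcomp Require Import all_classical all_reals all_analysis.
From mathcomp Require Import lra zify.
Import Order.TTheory GRing.Theory Num.Theory numFieldNormedType.Exports.
Local Open Scope classical_set_scope.
Local Open Scope ring_scope.
Set Implicit Arguments. Unset Strict Implicit.

Section Aux.
Variable R : realType.

Definition wb (p : R) (b : bool) : R := if b then p else 1 - p.
Definition Wx N (p : R) (x : {ffun 'I_N -> bool}) : R := \prod_i wb p (x i).

Lemma forall_prod (I : finType) (b : I -> bool) :
  ((if [forall i, b i] then 1 else 0) : R) = \prod_i (if b i then 1 else 0).
Proof.
case: (boolP [forall i, b i]) => [/forallP H | /forallPn [i Hi]].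
  by rewrite big1 // => i _; rewrite H.
by rewrite (bigD1 i) //= (negbTE Hi) mul0r.
Qed.

Lemma allabs_prob N (p : R) (A : {set 'I_N}) :
  \sum_(x : {ffun 'I_N -> bool}) Wx p x * (if [forall j in A, ~~ x j] then 1 else 0)
  = (1 - p) ^+ #|A|.
Proof.
transitivity (\sum_(x : {ffun 'I_N -> bool})
   \prod_i (wb p (x i) * (if (i \in A) ==> ~~ x i then 1 else 0))).
  apply: eq_bigr => x _; rewrite /Wx forall_prod -big_split //.
rewrite -(@bigA_distr_bigA R 0 1 *%R +%R _ _ (fun i b => wb p b * (if (i \in A) ==> ~~ b then 1 else 0))) /=.
transitivity (\prod_(i : 'I_N) (if i \in A then 1 - p else 1)).
  apply: eq_bigr => i _; rewrite big_bool /= /wb.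
  by case: (i \in A) => /=; rewrite ?mulr1 ?mulr0 ?add0r // subrKC.
by rewrite -big_mkcond /= prodr_const.
Qed.


Definition agree N (S S' : {set 'I_N}) (x : {ffun 'I_N -> bool}) : bool :=
  [exists j in S', x j] == [exists j in S, x j].

Definition ind (b : bool) : R := if b then 1 else 0.

Lemma agree_le N (S S' : {set 'I_N}) x :
  ind (agree S S' x) <=
  1 - ind [forall j in S', ~~ x j] + ind [forall j in S' :|: S, ~~ x j].
Proof.
rewrite /agree.
have E1 : [exists j in S', x j] = ~~ [forall j in S', ~~ x j].
  by rewrite negb_forall_in; apply: eq_existsb => j; rewrite negbK.
have E2 : [exists j in S, x j] = ~~ [forall j in S, ~~ x j].
  by rewrite negb_forall_in; apply: eq_existsb => j; rewrite negbK.
have E3 : [forall j in S' :|: S, ~~ x j] = [forall j in S', ~~ x j] && [forall j in S, ~~ x j].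
  apply/idP/andP.
    move=> /forall_inP H; split; apply/forall_inP => j Hj; apply: H;
      by rewrite inE Hj ?orbT.
  case=> /forall_inP H1 /forall_inP H2; apply/forall_inP => j.
  by rewrite inE => /orP [] ?; [apply: H1 | apply: H2].
rewrite E1 E2 E3 /ind.
by case: [forall j in S', ~~ x j]; case: [forall j in S, ~~ x j] => /=; lra.
Qed.

Lemma Wx_ge0 N (p : R) x : 0 <= p <= 1 -> 0 <= Wx (N:=N) p x.
Proof.
move=> /andP [p0 p1]; apply: prodr_ge0 => i _; rewrite /wb.
by case: (x i) => //; rewrite subr_ge0.
Qed.

Lemma test_bound N (p : R) (S S' : {set 'I_N}) : 0 <= p <= 1 ->
  \sum_(x : {ffun 'I_N -> bool}) Wx p x * ind (agree S S' x) <=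
  1 - (1 - p) ^+ #|S'| + (1 - p) ^+ #|S' :|: S|.
Proof.
move=> hp.
have H1 : (1 : R) = \sum_(x : {ffun 'I_N -> bool}) Wx p x * ind [forall j in (finset.set0 : {set 'I_N}), ~~ x j].
  by rewrite [RHS]allabs_prob cards0 expr0.
rewrite {1}H1 -(allabs_prob p S') -(allabs_prob p (S' :|: S)) -sumrB -big_split /=.
apply: ler_sum => x _.
rewrite -mulrBr -mulrDr; apply: ler_wpM2l; first exact: Wx_ge0.
have -> : ind [forall j in (finset.set0 : {set 'I_N}), ~~ x j] = 1.
  by rewrite /ind; case: forall_inP => // H; exfalso; apply: H => j; rewrite finset.in_set0.
exact: agree_le.
Qed.

Definition uncur N T (F : {ffun 'I_T -> {ffun 'I_N -> bool}}) : design N T :=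
  [ffun pr => F pr.2 pr.1].
Definition cur N T (X : design N T) : {ffun 'I_T -> {ffun 'I_N -> bool}} :=
  [ffun t => [ffun i => X (i, t)]].

Lemma uncur_bij N T : bijective (@uncur N T).
Proof.
exists (@cur N T) => [F|X].
  by apply/ffunP => t; apply/ffunP => i; rewrite !ffunE.
by apply/ffunP => -[i t]; rewrite !ffunE.
Qed.

Lemma ind_forall (I : finType) (b : I -> bool) :
  ind [forall i, b i] = \prod_i ind (b i).
Proof. exact: forall_prod. Qed.

Lemma design_agree N T K (S S' : {set 'I_N}) :
  \sum_(X : design N T) design_prob R K X * ind (outcome X S' == outcome X S) =
  \prod_(t < T) \sum_(x : {ffun 'I_N -> bool}) Wx (K%:R^-1) x * ind (agree S S' x).
Proof.
rewrite (reindex (@uncur N T)) /=; last exact: onW_bij (uncur_bij N T).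
transitivity (\sum_(F : {ffun 'I_T -> {ffun 'I_N -> bool}})
   \prod_(t < T) (Wx (K%:R^-1) (F t) * ind (agree S S' (F t)))).
  apply: eq_bigr => F _; rewrite big_split /=; congr (_ * _).
    rewrite /design_prob /Wx exchange_big /= pair_bigA /=.
    by apply: eq_bigr => -[i t] _; rewrite ffunE.
  rewrite -ind_forall; congr ind.
  apply/eqP/forallP => [H t | H].
    move/ffunP: H => /(_ t); rewrite !ffunE /agree => E.
    have E1 : [exists j in S', F t j] = [exists j in S', uncur F (j, t)].
      by apply: eq_existsb => j; rewrite ffunE.
    have E2 : [exists j in S, F t j] = [exists j in S, uncur F (j, t)].
      by apply: eq_existsb => j; rewrite ffunE.
    by rewrite E1 E2 E.
  apply/ffunP => t; rewrite !ffunE; move: (H t); rewrite /agree => /eqP E.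
  transitivity [exists j in S', F t j].
    by apply: eq_existsb => j; rewrite ffunE.
  rewrite E; by apply: eq_existsb => j; rewrite ffunE.
by rewrite -(@bigA_distr_bigA R 0 1 *%R +%R _ _ (fun t x => Wx (K%:R^-1) x * ind (agree S S' x))).
Qed.

Lemma lerXn (x y : R) n : 0 <= x -> x <= y -> x ^+ n <= y ^+ n.
Proof.
move=> x0 xy; elim: n => [|n IH]; first by rewrite !expr0.
rewrite !exprS; apply: ler_pM => //; exact: exprn_ge0.
Qed.

Lemma q_lower (K : nat) : (2 <= K)%N -> expR (-2) <= (1 - K%:R^-1 : R) ^+ K.
Proof.
move=> hK.
have K0 : (0 : R) < K%:R by rewrite ltr0n; lia.
set x : R := K%:R^-1.
have x0 : 0 <= x by rewrite invr_ge0 ltW.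
have xh : x <= 2^-1.
  rewrite /x lef_pV2 ?posrE // ?ltr0n //; first by rewrite ler_nat.
have h1 : expR (- (2 * x)) <= 1 - x.
  rewrite expRN; have E0 : 0 < expR (2 * x) by exact: expR_gt0.
  rewrite -[_^-1]mul1r ler_pdivrMr //.
  have := expR_ge1Dx (2 * x); nra.
have -> : expR (-2) = expR (- (2 * x)) ^+ K.
  rewrite -expRM_natl; congr expR; rewrite /x mulrN mulrCA mulfV ?mulr1 //.
  by rewrite gt_eqF.
apply: lerXn => //; exact: expR_ge0.
Qed.

Lemma q_upper (K m : nat) (alpha : R) : (1 <= K)%N -> alpha * K%:R < m%:R ->
  (1 - K%:R^-1 : R) ^+ m <= expR (- alpha).
Proof.
move=> hK ham.
have K0 : (0 : R) < K%:R by rewrite ltr0n; lia.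
have q0 : 0 <= 1 - K%:R^-1 :> R.
  by rewrite subr_ge0 invr_le1 ?unitfE ?gt_eqF // ler1n.
have hq : 1 - K%:R^-1 <= expR (- K%:R^-1) :> R by exact: expR_ge1Dx.
apply: (le_trans (lerXn m q0 hq)).
rewrite -expRM_natl ler_expR mulrN lerN2 -(ler_pM2r K0) -mulrA mulVf ?gt_eqF // mulr1.
exact: ltW.
Qed.

Lemma rho_bound (K m u : nat) (alpha : R) : (2 <= K)%N -> 0 < alpha ->
  alpha * K%:R < m%:R -> (K + m <= u)%N ->
  0 <= 1 - (1 - K%:R^-1 : R) ^+ K + (1 - K%:R^-1) ^+ u <=
     1 - expR (-2) * (1 - expR (- alpha)).
Proof.
move=> hK ha ham hu.
have K0 : (0 : R) < K%:R by rewrite ltr0n; lia.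
set q : R := 1 - K%:R^-1.
have q0 : 0 <= q by rewrite subr_ge0 invr_le1 ?unitfE ?gt_eqF // ler1n; lia.
have q1 : q <= 1 by rewrite /q lerBlDr lerDl invr_ge0 ltW.
have hqu : q ^+ u <= q ^+ K * q ^+ m.
  rewrite -exprD -(subnKC hu) exprD -[X in _ <= X]mulr1; apply: ler_wpM2l.
    exact: exprn_ge0.
  exact: exprn_ile1.
have hKl := q_lower hK.
have hmu := @q_upper K m alpha (ltnW hK) ham.
have hqK1 : q ^+ K <= 1 := exprn_ile1 K q0 q1.
have e1 : expR (- alpha) < 1 by rewrite -expR0 ltr_expR oppr_lt0.
apply/andP; split.
  have := exprn_ge0 u q0; lra.
have : expR (-2) * (1 - expR (- alpha)) <= q ^+ K * (1 - q ^+ m).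
  apply: ler_pM; [exact: expR_ge0 | lra | exact: hKl | lra].
have := exprn_ge0 m q0; nra.
Qed.

Definition cst (alpha : R) : R := expR (-2) * (1 - expR (- alpha)).

Lemma dp_ge0 N T K (X : design N T) : (1 <= K)%N -> 0 <= design_prob R K X.
Proof.
move=> hK; have K0 : (0 : R) < K%:R by rewrite ltr0n; lia.
apply: prodr_ge0 => i _; case: (X i); first by rewrite invr_ge0 ltW.
by rewrite subr_ge0 invr_le1 ?unitfE ?gt_eqF // ler1n.
Qed.

Lemma pair_bound N T K (alpha : R) (S S' : {set 'I_N}) :
  (2 <= K)%N -> 0 < alpha -> S \in ksubsets N K -> S' \in ksubsets N K ->
  \sum_(X : design N T) design_prob R K X *
     ind (misses_too_many K alpha S S' && (outcome X S' == outcome X S))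
  <= (1 - cst alpha) ^+ T.
Proof.
move=> hK ha hS hS'.
have c1 : 0 <= 1 - cst alpha.
  rewrite /cst; have e1 : expR (- alpha) < 1 by rewrite -expR0 ltr_expR oppr_lt0.
  have e2 : expR (-2) <= 1 :> R by rewrite -[X in _ <= X]expR0 ler_expR; lra.
  have := expR_ge0 (- alpha); have := expR_ge0 (-2 : R); nra.
case hm: (misses_too_many K alpha S S'); last first.
  rewrite big1 ?exprn_ge0 // => X _; by rewrite /ind /= mulr0.
have -> : \sum_(X : design N T) design_prob R K X *
     ind (true && (outcome X S' == outcome X S)) =
   \sum_(X : design N T) design_prob R K X * ind (outcome X S' == outcome X S) by [].
rewrite design_agree -[in X in _ <= X](card_ord T) -prodr_const.
have K0 : (0 : R) < K%:R by rewrite ltr0n; lia.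
have hp : 0 <= (K%:R^-1 : R) <= 1.
  apply/andP; split; first by rewrite invr_ge0 ltW.
  by rewrite invr_le1 ?unitfE ?gt_eqF // ler1n; lia.
apply: ler_prod => t _; apply/andP; split.
  apply: sumr_ge0 => x _; apply: mulr_ge0; first exact: Wx_ge0.
  by rewrite /ind; case: agree.
apply: (le_trans (test_bound _ _ hp)).
move: hS hS'; rewrite !inE => /eqP cS /eqP cS'.
rewrite cS'.
have hu : (K + #|S :\: S'| <= #|S' :|: S|)%N.
  have := cardsD S S'; have := subset_leq_card (subsetIl S S').
  have := cardsUI S' S; rewrite finset.setIC cS cS'; lia.
by have /andP [_ H2] := rho_bound hK ha hm hu.
Qed.

Lemma ind_ge0 b : 0 <= ind b.
Proof. by rewrite /ind; case: b. Qed.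

Lemma ind_bound N T K (alpha : R) (S : {set 'I_N}) (X : design N T) :
  S \in ksubsets N K ->
  (if [exists S', ML_output R K X (outcome X S) S' && misses_too_many K alpha S S']
   then 1 else 0) <=
  \sum_(S' in ksubsets N K) ind (misses_too_many K alpha S S' && (outcome X S' == outcome X S)).
Proof.
move=> hS.
case: existsP => [[S' /andP [hML hm]] | _]; last first.
  by apply: sumr_ge0 => S' _; exact: ind_ge0.
move: hML => /andP [hS'k /forall_inP hmax].
have := hmax S hS; rewrite /lik eqxx.
case: eqP => E; last by rewrite ler10.
move=> _; rewrite (bigD1 S') //= hm E eqxx /= {1}/ind.
rewrite lerDl; apply: sumr_ge0 => ? _; exact: ind_ge0.
Qed.

Lemma err_bound N K T (alpha : R) : (2 <= K)%N -> 0 < alpha ->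
  err_prob N K T alpha <= 'C(N, K)%:R * (1 - cst alpha) ^+ T.
Proof.
move=> hK ha.
set e := (1 - cst alpha) ^+ T.
have cks : #|ksubsets N K| = 'C(N, K) by rewrite /ksubsets card_draws card_ord.
set C : R := 'C(N, K)%:R.
have C0 : 0 <= C^-1 by rewrite invr_ge0 ler0n.
rewrite /err_prob.
apply: (le_trans (_ : _ <= \sum_(S in ksubsets N K) C^-1 * (C * e))).
  apply: ler_sum => S hS.
  apply: (le_trans (_ : _ <= \sum_(X : design N T) C^-1 * design_prob R K X *
      \sum_(S' in ksubsets N K) ind (misses_too_many K alpha S S' && (outcome X S' == outcome X S)))).
    apply: ler_sum => X _; apply: ler_wpM2l; last exact: ind_bound.
    apply: mulr_ge0 => //; apply: dp_ge0; lia.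
  under eq_bigr => X _ do rewrite -mulrA mulr_sumr.
  rewrite -mulr_sumr exchange_big /=; apply: ler_wpM2l => //.
  rewrite /C -cks mulr_natl -sumr_const; apply: ler_sum => S' hS'.
  exact: pair_bound.
rewrite sumr_const cks -mulr_natl.
rewrite /C; case: (eqVneq ('C(N, K)%:R : R) 0) => [->|nz]; first by rewrite !mul0r.
by rewrite mulrA mulfV // mul1r.
Qed.

Lemma bin_le_exp n K : ('C(n, K) <= n ^ K)%N.
Proof.
have h : (n ^_ K <= n ^ K)%N.
  elim: K => [|k IH]; first by [].
  rewrite ffactnSr expnSr; apply: leq_mul => //; exact: leq_subr.
apply: leq_trans h; rewrite -bin_ffact; apply: leq_pmulr; exact: fact_gt0.
Qed.

Lemma final_arith (n K T : nat) (c C : R) : (2 <= K)%N -> 0 < c -> c <= 1 ->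
  c * C = 2 -> C * K%:R * ln (n%:R : R) < T.+1%:R ->
  'C(n, K)%:R * (1 - c) ^+ T <= expR c * (n.+1%:R)^-1.
Proof.
move=> hK c0 c1 cC hT.
have E0 : 0 <= expR c * (n.+1%:R)^-1 by apply: mulr_ge0; [exact: expR_ge0 | rewrite invr_ge0].
case: (ltnP n K) => hnK.
  by rewrite bin_small // mul0r.
have n0 : (0 : R) < n%:R by rewrite ltr0n; lia.
set L := ln (n%:R : R) in hT *.
have hn : n%:R = expR L by rewrite /L lnK // posrE.
have h1 : ('C(n, K)%:R : R) <= expR (K%:R * L).
  by rewrite expRM_natl -hn -natrX ler_nat bin_le_exp.
have h2 : (1 - c) ^+ T <= expR (T%:R * - c).
  rewrite expRM_natl; apply: lerXn; first lra.
  exact: expR_ge1Dx.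
have h3 : expR (T%:R * - c) <= expR (c - 2 * (K%:R * L)).
  rewrite ler_expR -cC.
  have : C * K%:R * L - 1 < T%:R by move: hT; rewrite -natr1; lra.
  move=> hT'; have := ler_wpM2l (ltW c0) (ltW hT').
  move=> hh; nra.
apply: (le_trans (ler_pM (ler0n _ _) (exprn_ge0 _ (_ : 0 <= 1 - c)) h1 (le_trans h2 h3))).
  lra.
rewrite -expRD (_ : K%:R * L + (c - 2 * (K%:R * L)) = c + - (K%:R * L)); last lra.
rewrite expRD expRN expRM_natl -hn; apply: ler_wpM2l; first exact: expR_ge0.
rewrite lef_pV2 ?posrE ?ltr0n ?exprn_gt0 //.
rewrite -natrX ler_nat.
apply: (@leq_trans (n ^ 2)); last by rewrite leq_pexp2l //; lia.
by rewrite expnS expn1; nia.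
Qed.

End Aux.

Theorem theorem6 (R : realType) (alpha : R) (halpha0 : 0 < alpha) (halpha1 : alpha < 1) :
  exists C : R, 0 < C /\
    forall K : nat -> nat,
      (forall M : nat, \forall n \near \oo, (M <= K n)%N) ->
      ((fun n : nat => (K n)%:R / n%:R : R) @ \oo --> (0 : R)) ->
      exists T : nat -> nat,
        (forall n : nat, (T n)%:R <= C * (K n)%:R * ln (n%:R : R)) /\
        ((fun n : nat => err_prob n (K n) (T n) alpha) @ \oo --> (0 : R)).
Proof.
set c := cst alpha.
have e1 : expR (- alpha) < 1 by rewrite -expR0 ltr_expR oppr_lt0.
have e2 : expR (-2) <= 1 :> R by rewrite -[X in _ <= X]expR0 ler_expR; lra.
have e3 : 0 < expR (-2) :> R := expR_gt0 _.
have c0 : 0 < c by rewrite /c /cst; apply: mulr_gt0 => //; lra.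
have c1 : c <= 1.
  rewrite /c /cst; have := expR_ge0 (- alpha); nra.
exists (2 / c); split; first by apply: divr_gt0.
move=> K hK _.
exists (fun n => Num.Def.trunc (2 / c * (K n)%:R * ln (n%:R : R))).
have hx : forall n : nat, 0 <= 2 / c * (K n)%:R * ln (n%:R : R).
  move=> n; apply: mulr_ge0; first by apply: mulr_ge0 => //; apply: ltW; apply: divr_gt0.
  case: n => [|n]; first by rewrite ln0.
  by apply: ln_ge0; rewrite ler1n.
split.
  by move=> n; rewrite truncn_le.
apply: (@squeeze_cvgr _ _ _ _ (fun _ => 0) (fun n => expR c * harmonic n)).
- near=> n.
  have hK2 : (2 <= K n)%N by near: n; exact: hK 2.
  apply/andP; split.
    rewrite /err_prob; apply: sumr_ge0 => S _; apply: sumr_ge0 => X _.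
    apply: mulr_ge0; last by case: ifP.
    apply: mulr_ge0; first by rewrite invr_ge0 ler0n.
    apply: dp_ge0; lia.
  apply: (le_trans (err_bound _ _ hK2 halpha0)).
  rewrite /harmonic /=.
  apply: (final_arith (C := 2 / c)) => //.
    by rewrite mulrCA mulfV ?mulr1 // gt_eqF.
  exact: truncnS_gt.
- exact: cvg_cst.
- rewrite -(mulr0 (expR c)); apply: cvgMl_tmp; exact: cvg_harmonic.
Unshelve. all: end_near.
Qed.
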